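(* Let $\mathfrak g=\mathbb R f_1\ltimes_M\mathfrak u$ be a real almost abelian Lie algebra, where $\mathfrak u$ is an abelian ideal of codimension one and $M=\operatorname{ad}_{f_1}|_{\mathfrak u}$, endowed with an LCS structure $(\omega,\theta)$. If $M$ is invertible, then the LCS structure is of the second kind.
   Context: An LCS structure on $\mathfrak g$ is a pair $(\omega,\theta)$ with $\omega\in\Lambda^2\mathfrak g^*$ non-degenerate and $\theta\in\mathfrak g^*$ closed and nonzero, such that $d\omega=\theta\wedge\omega$. Let $\mathfrak g_\omega=\{x\in\mathfrak g:\ \omega([x,y],z)+\omega(y,[x,z])=0\ \text{for all }y,z\in\mathfrak g\}$. The LCS structure is of the first kind if $\theta|_{\mathfrak g_\omega}$ is surjective onto $\mathbb R$, and of the second kind if $\theta|_{\mathfrak g_\omega}\equiv0$. *)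

(* Defs.v *)
From HB Require Import structures.
From mathcomp Require Import all_boot all_order all_algebra.
From mathcomp Require Import reals.
Set Implicit Arguments. Unset Strict Implicit. Unset Printing Implicit Defensive.
Import Order.TTheory GRing.Theory Num.Theory.
Local Open Scope ring_scope.

(* The almost abelian Lie algebra g = R f_1 |x_M u, with u = R^n (column
   vectors) an abelian ideal.  An element a f_1 + u is the pair (a, u). *)
Definition alg (R : realType) (n : nat) : Type := (R * 'cV[R]_n)%type.

Section AlmostAbelian.
Variables (R : realType) (n : nat).

Definition gzero : alg R n := (0, 0).
Definition gadd (x y : alg R n) : alg R n := (x.1 + y.1, x.2 + y.2).
Definition gscale (c : R) (x : alg R n) : alg R n := (c * x.1, c *: x.2).

(* [a f_1 + u, b f_1 + v] = a M v - b M u ; so ad_{f_1}|_u = M, [u,u] = 0. *)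
Definition gbracket (M : 'M[R]_n) (x y : alg R n) : alg R n :=
  (0, x.1 *: (M *m y.2) - y.1 *: (M *m x.2)).

Definition is_linear_form (t : alg R n -> R) : Prop :=
  (forall x y, t (gadd x y) = t x + t y) /\
  (forall c x, t (gscale c x) = c * t x).

Definition is_2form (w : alg R n -> alg R n -> R) : Prop :=
  (forall x, is_linear_form (w x)) /\
  (forall y, is_linear_form (fun x => w x y)) /\
  (forall x, w x x = 0).

Definition nondegenerate (w : alg R n -> alg R n -> R) : Prop :=
  forall x, (forall y, w x y = 0) -> x = gzero.

Definition closed_1form (M : 'M[R]_n) (t : alg R n -> R) : Prop :=
  forall x y, t (gbracket M x y) = 0.

Definition d2 (M : 'M[R]_n) (w : alg R n -> alg R n -> R) (x y z : alg R n) : R :=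
  - (w (gbracket M x y) z + w (gbracket M y z) x + w (gbracket M z x) y).

Definition wedge12 (t : alg R n -> R) (w : alg R n -> alg R n -> R)
    (x y z : alg R n) : R :=
  t x * w y z + t y * w z x + t z * w x y.

Definition is_LCS (M : 'M[R]_n) (w : alg R n -> alg R n -> R) (t : alg R n -> R)
  : Prop :=
  is_2form w /\ nondegenerate w /\ is_linear_form t /\ closed_1form M t /\
  (exists x, t x <> 0) /\
  (forall x y z, d2 M w x y z = wedge12 t w x y z).

Definition g_omega (M : 'M[R]_n) (w : alg R n -> alg R n -> R) (x : alg R n)
  : Prop :=
  forall y z, w (gbracket M x y) z + w y (gbracket M x z) = 0.

Definition second_kind (M : 'M[R]_n) (w : alg R n -> alg R n -> R)
    (t : alg R n -> R) : Prop :=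
  forall x, g_omega M w x -> t x = 0.

End AlmostAbelian.

(* Main.v *)
Require Import Defs.
From HB Require Import structures.
From mathcomp Require Import all_boot all_order all_algebra.
From mathcomp Require Import reals.
Local Open Scope ring_scope.
Import GRing.Theory Num.Theory.

Set Implicit Arguments.
Section Helpers.
Variables (R : realType) (n : nat).
Implicit Types (t : alg R n -> R).

Definition ee : alg R n := (1, 0).

Lemma lin0 t : is_linear_form t -> t (0, 0) = 0.
Proof.
rewrite /is_linear_form; case=> tD _; have := tD (0,0) (0,0); rewrite /gadd /= !addr0 => h.
by apply: (@addrI _ (t (0,0))); rewrite addr0 -h.
Qed.

Lemma linP t a v : is_linear_form t -> t (a, v) = a * t ee + t (0, v).
Proof.
rewrite /is_linear_form; case=> tD tZ.
have -> : (a, v) = gadd (gscale a ee) (0, v).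
  by rewrite /gadd /gscale /= mulr1 addr0 scaler0 add0r.
by rewrite tD tZ.
Qed.

Lemma linZ t c v : is_linear_form t -> t (0, c *: v) = c * t (0, v).
Proof.
rewrite /is_linear_form; case=> tD tZ.
have -> : ((0 : R), c *: v) = gscale c (0, v) by rewrite /gscale /= mulr0.
by rewrite tZ.
Qed.

Lemma linN t v : is_linear_form t -> t (0, - v) = - t (0, v).
Proof.
move=> h; rewrite -scaleN1r linZ //; by rewrite mulN1r.
Qed.

Lemma antisym (w : alg R n -> alg R n -> R) x y :
  is_2form w -> w x y = - w y x.
Proof.
rewrite /is_2form; case=> wl [wr wa].
have := wa (gadd x y).
rewrite (proj1 (wr _)) (proj1 (wl x)) (proj1 (wl y)) wa wa add0r addr0.
by move/eqP; rewrite addr_eq0 => /eqP.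
Qed.
End Helpers.
Arguments ee {R n}.

Theorem lemma4p7 (R : realType) (n : nat) (M : 'M[R]_n)
  (w : alg R n -> alg R n -> R) (t : alg R n -> R) :
  is_LCS M w t -> M \in unitmx -> second_kind M w t.
Proof.
move=> [w2 [nd [tl [tc [[x0 tx0] dw]]]]] Mu [a u] gx.
have tu : forall v, t (0, v) = 0.
  move=> v; have := tc ee (0, invmx M *m v).
  by rewrite /gbracket /= scale1r scale0r subr0 mulmxA mulmxV // mul1mx.
rewrite linP // tu addr0.
have [->|a0] := eqVneq a 0; first by rewrite mul0r.
have c0 : t ee != 0.
  apply/eqP=> c0; apply: tx0; case: x0 => b v.
  by rewrite linP // c0 tu mulr0 addr0.
have wl := fun x => w2.1 x.
have wr := fun y => w2.2.1 y.
have wu : forall v v', w (0, v) (0, v') = 0.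
  move=> v v'.
  have h1 := dw ee (0, v) (0, v').
  rewrite /d2 /wedge12 /gbracket /= ?scale1r ?scale0r ?mulmx0 ?scaler0 ?subr0
    ?sub0r ?subrr ?tu ?mul0r ?addr0 in h1.
  have z1 : w (0, 0) ee = 0 := lin0 (wr ee).
  have z2 : w (0, - (M *m v')) (0, v) = - w (0, M *m v') (0, v) := linN (M *m v') (wr (0, v)).
  rewrite z1 z2 addr0 (antisym (0, M *m v') (0, v) w2) opprK in h1.
  have h2 := gx (0, v) (0, v').
  rewrite /gbracket /= !scale0r !subr0 (linZ _ _ (wr _)) (linZ _ _ (wl _)) in h2.
  rewrite -mulrDr in h2.
  have h3 : w (0, M *m v) (0, v') + w (0, v) (0, M *m v') = 0.
    by move/eqP: h2; rewrite mulf_eq0 (negbTE a0) /= => /eqP.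
  rewrite h3 oppr0 in h1.
  by move/eqP: h1; rewrite eq_sym mulf_eq0 (negbTE c0) /= => /eqP.
have we : forall v, w ee (0, v) = 0.
  move=> v; have h := gx ee (0, invmx M *m v).
  rewrite /gbracket /= !scale0r !subr0 mulmx0 scaler0 sub0r scale1r in h.
  rewrite wu add0r (linZ _ _ (wl _)) mulmxA mulmxV // mul1mx in h.
  by move/eqP: h; rewrite mulf_eq0 (negbTE a0) /= => /eqP.
have : ee = gzero R n.
  apply: nd => -[b v]; rewrite (linP _ _ (wl _)) we addr0 w2.2.2 mulr0 //.
by case; move/eqP; rewrite oner_eq0.
Qed.
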